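(* Let $P,Q\in\mathrm{Mat}_d(\mathbb{Z})$ be irreducible and let $p(x)\in\mathbb{Q}[x]$ be the characteristic polynomial of $P^{-1}Q$. Then $P,Q$ are coprime if and only if $c=|\det P|$ is the smallest positive integer such that $c\,p(x)\in \mathbb{Z}[x]$.
   Context: Irreducible: there are no non-trivial subspaces $U,V$ of $\mathbb{Q}^d$ of the same dimension (non-trivial meaning neither $\{0\}$ nor $\mathbb{Q}^d$) with $PU\subseteq V$ and $QU\subseteq V$; irreducible matrices are invertible over $\mathbb{Q}$. Coprime: there are no $R,S\in \mathrm{GL}_d(\mathbb{Q})$ with $0<|\det(R)\det(S)|<1$ such that $RPS,RQS\in\mathrm{Mat}_d(\mathbb{Z})$. *)

(* Defs.v *)
From HB Require Import structures.
From mathcomp Require Import all_boot all_order all_algebra.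
Set Implicit Arguments. Unset Strict Implicit. Unset Printing Implicit Defensive.
Import Order.TTheory GRing.Theory Num.Theory.
Local Open Scope ring_scope.

Definition ratmx (d : nat) (P : 'M[int]_d) : 'M[rat]_d := map_mx intr P.

(* Subspaces of Q^d are represented as row spaces of d x d rational matrices
   (mxalgebra).  Q^d is viewed as column vectors; the image P U of the
   subspace spanned by the rows of U (read as column vectors) is the row
   space of U *m P^T. *)
Definition mx_irreducible (d : nat) (P Q : 'M[rat]_d) : Prop :=
  ~ exists U V : 'M[rat]_d,
      [/\ \rank U = \rank V, (0 < \rank U)%N, (\rank U < d)%N,
          (U *m P^T <= V)%MS & (U *m Q^T <= V)%MS].

Definition mx_integral (d : nat) (A : 'M[rat]_d) : Prop :=
  forall i j, A i j \is a Num.int.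

Definition mx_coprime (d : nat) (P Q : 'M[rat]_d) : Prop :=
  ~ exists R S : 'M[rat]_d,
      [/\ R \in unitmx, S \in unitmx,
          0 < `|\det R * \det S| < 1,
          mx_integral (R *m P *m S) & mx_integral (R *m Q *m S)].

Definition least_int_clearing (c : nat) (p : {poly rat}) : Prop :=
  [/\ (0 < c)%N, c%:R *: p \is a polyOver Num.int &
      forall c' : nat, (0 < c')%N -> c'%:R *: p \is a polyOver Num.int ->
        (c <= c')%N].

(* Main.v *)
Require Import Defs.
From HB Require Import structures.
From mathcomp Require Import all_boot all_order all_algebra.
From mathcomp Require Import zify.
Import Order.TTheory GRing.Theory Num.Theory.
Set Implicit Arguments. Unset Strict Implicit. Unset Printing Implicit Defensive.
Local Open Scope ring_scope.

Section Pencil.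
Variable R : comNzRingType.
Definition pencil n (M N : 'M[R]_n) : 'M[{poly R}]_n :=
  'X *: map_mx polyC M - map_mx polyC N.
Definition dpen n (M N : 'M[R]_n) := \det (pencil M N).

Lemma pencilM n (A M N B : 'M[R]_n) :
  pencil (A *m M *m B) (A *m N *m B) =
  map_mx polyC A *m pencil M N *m map_mx polyC B.
Proof.
by rewrite /pencil mulmxBr mulmxBl -scalemxAr -scalemxAl !map_mxM.
Qed.

Lemma dpenM n (A M N B : 'M[R]_n) :
  dpen (A *m M *m B) (A *m N *m B) = (\det A * \det B)%:P * dpen M N.
Proof.
rewrite /dpen pencilM !det_mulmx !det_map_mx rmorphM /=.
by rewrite mulrAC.
Qed.
End Pencil.

Lemma dpen_map (R S : comNzRingType) (f : {rmorphism R -> S}) n (M N : 'M[R]_n) :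
  map_poly f (dpen M N) = dpen (map_mx f M) (map_mx f N).
Proof.
rewrite /dpen -det_map_mx; congr (\det _); apply/matrixP => i j.
by rewrite !mxE rmorphB /= rmorphM /= !map_polyC map_polyX.
Qed.

Section FieldPencil.
Variable F : fieldType.
Lemma dpen_inv n (M N : 'M[F]_n) : M \in unitmx ->
  dpen M N = (\det M)%:P * char_poly (invmx M *m N).
Proof.
move=> uM; rewrite /dpen /char_poly -det_map_mx -det_mulmx; congr (\det _).
rewrite /char_poly_mx mulmxBr mul_mx_scalar -map_mxM mulmxA mulmxV //.
by rewrite mul1mx.
Qed.

Lemma dpen_det0 n (M N : 'M[F]_n) : dpen M N = 0 -> \det M = 0.
Proof.
move=> H; apply/eqP; apply: contraT => dM.
have uM : M \in unitmx by rewrite unitmxE unitfE.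
move: H; rewrite dpen_inv // => /eqP; rewrite mulf_eq0 polyC_eq0 (negbTE dM) /=.
by rewrite (negbTE (monic_neq0 (char_poly_monic _))).
Qed.
End FieldPencil.

Lemma redP p (pp : prime p) (z : int) : ((z%:~R : 'F_p) == 0) = (p %| z)%Z.
Proof.
case: z => n.
  rewrite /= -[_ == 0](inj_eq val_inj) /= val_Fp_nat //.
rewrite NegzE rmorphN /= oppr_eq0 -[_ == 0](inj_eq val_inj) /= val_Fp_nat //.
Qed.

Lemma bur (R : Type) n (A : 'M[R]_1) (B : 'M[R]_(1,n)) (C : 'M[R]_(n,1)) (D : 'M[R]_n) j :
  (block_mx A B C D : 'M_(1+n)) (lshift n ord0) (rshift 1 j) = B 0 j.
Proof. by rewrite block_mxEur. Qed.
Lemma bur2 (R : Type) n (A : 'M[R]_1) (B : 'M[R]_(1,n)) (C : 'M[R]_(n,1)) (D : 'M[R]_n) j :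
  (block_mx A B C D : 'M_(n.+1)) ord0 (rshift 1 j) = B 0 j.
Proof. by rewrite -(@bur _ _ A B C D j); congr (_ _ _); apply: val_inj. Qed.

Lemma bdr2 (R : Type) n (A : 'M[R]_1) (B : 'M[R]_(1,n)) (C : 'M[R]_(n,1)) (D : 'M[R]_n) i j :
  (block_mx A B C D : 'M_(n.+1)) (rshift 1 i) (rshift 1 j) = D i j.
Proof. exact: block_mxEdr. Qed.

Section Main.
Variables (p : nat) (pp : prime p).
Local Notation red A := (map_mx (intr : int -> 'F_p) A).

Lemma intr_Fp_neq0 (z : int) : z \is a GRing.unit -> (z%:~R : 'F_p) != 0.
Proof. by move=> uz; rewrite -unitfE rmorph_unit. Qed.

Lemma main_ind n (P Q : 'M[int]_n) :
  dpen (red P) (red Q) = 0 ->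
  exists X Y : 'M[int]_n, [/\ X \in unitmx, Y \in unitmx &
    exists I J : {set 'I_n}, (#|I| + #|J| = n.+1)%N /\
      forall i j, i \in I -> j \in J ->
        (red (X *m P *m Y)) i j = 0 /\ (red (X *m Q *m Y)) i j = 0].
Proof.
elim: n P Q => [|n IH] P Q H.
  by move: H; rewrite /dpen det_mx00 => /eqP; rewrite oner_eq0.
have [L uL [R0 uR0 [d _ EP]]] := int_Smith_normal_form P.
set D := \matrix_(i, j) _ in EP.
have [i0 di0] : exists i0 : 'I_n.+1, (d`_i0)%:~R = 0 :> 'F_p.
  have := dpen_det0 H; rewrite EP !map_mxM !det_mulmx.
  have -> : red D = diag_mx (\row_i (d`_i)%:~R).
    by apply/matrixP => i j; rewrite !mxE rmorphMn.
  rewrite det_diag !det_map_mx => /eqP; rewrite !mulf_eq0.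
  rewrite unitmxE in uL; rewrite unitmxE in uR0.
  rewrite (negbTE (intr_Fp_neq0 uL)) (negbTE (intr_Fp_neq0 uR0)) /= orbF.
  by case/prodf_eq0 => i _; rewrite mxE => /eqP; exists i.
pose X1 := xrow i0 ord0 (invmx L).
have uX1 : X1 \in unitmx.
  by rewrite /X1 xrowE unitmx_mul unitmx_perm unitmx_inv uL.
have hP1 : forall j, ((X1 *m P) ord0 j)%:~R = 0 :> 'F_p.
  move=> j.
  have -> : X1 *m P = xrow i0 ord0 (D *m R0).
    by rewrite /X1 !xrowE -!mulmxA EP -!mulmxA mulKmx.
  rewrite /xrow /row_perm mxE perm.tpermR mxE rmorph_sum big1 // => k _.
  rewrite rmorphM /= mxE rmorphMn -[X in X *+ _ * _]/((d`_i0)%:~R : 'F_p) di0.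
  by rewrite mul0rn mul0r.
have [l ul [Rq uRq [e _ Eq]]] := int_Smith_normal_form (row ord0 (X1 *m Q)).
pose Y1 := invmx Rq.
have uY1 : Y1 \in unitmx by rewrite unitmx_inv.
pose P2 := X1 *m P *m Y1. pose Q2 := X1 *m Q *m Y1.
have hP2 : forall j, (P2 ord0 j)%:~R = 0 :> 'F_p.
  move=> j; rewrite /P2 mxE rmorph_sum big1 // => k _.
  by rewrite rmorphM /= hP1 mul0r.
have hQ2 : forall j, j != ord0 -> Q2 ord0 j = 0.
  move=> j nj.
  have <- : (row ord0 (X1 *m Q) *m Y1) 0 j = Q2 ord0 j.
    by rewrite -row_mul /Q2 mxE.
  rewrite Eq /Y1 mulmxK // mxE big1 // => k _.
  have jn0 : (nat_of_ord j) != 0%N.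
    by move: nj; apply: contra => /eqP h; apply/eqP/val_inj.
  by rewrite mxE (ord1 k) /= eq_sym (negbTE jn0) mulr0n mulr0.
have H2 : dpen (red P2) (red Q2) = 0.
  by rewrite /P2 /Q2 !map_mxM dpenM H mulr0.
have [c0|c0] := eqVneq ((Q2 ord0 ord0)%:~R : 'F_p) 0.
  exists X1, Y1; split => //; exists [set ord0], setT; split.
    by rewrite cards1 cardsT card_ord.
  move=> i j; rewrite inE => /eqP -> _; split; rewrite mxE.
    exact: hP2.
  have [->|nj] := eqVneq j ord0; first exact: c0.
  by rewrite hQ2 // rmorph0.
have EP2 : X1 *m P *m Y1 = P2 by [].
have EQ2 : X1 *m Q *m Y1 = Q2 by [].
clearbody P2 Q2.
pose P' := drsubmx (P2 : 'M_(1 + n)). pose Q' := drsubmx (Q2 : 'M_(1 + n)).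
have liftE : forall i : 'I_n, lift ord0 i = rshift 1 i by move=> i; apply: val_inj.
have Hm : dpen (red P') (red Q') = 0.
  move: H2; rewrite /dpen (expand_det_row _ ord0) (bigD1 ord0) //= big1 ?addr0; last first.
    by move=> j nj; rewrite !mxE hP2 hQ2 // !rmorph0 mulr0 subr0 mul0r.
  rewrite /cofactor.
  have -> : row' ord0 (col' ord0 (pencil (red P2) (red Q2))) = pencil (red P') (red Q').
    by apply/matrixP => i j; rewrite !mxE !liftE.
  rewrite !mxE hP2 rmorph0 mulr0 sub0r expr0 mul1r => /eqP.
  by rewrite mulf_eq0 oppr_eq0 polyC_eq0 (negbTE c0) /= => /eqP.
have [X' [Y' [uX' uY' [I' [J' [cIJ hIJ]]]]]] := IH P' Q' Hm.
pose Bx : 'M[int]_(1 + n) := block_mx 1 0 0 X'.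
pose By : 'M[int]_(1 + n) := block_mx 1 0 0 Y'.
have EB : forall M : 'M[int]_(1 + n), Bx *m M *m By =
    block_mx (ulsubmx M) (ursubmx M *m Y') (X' *m dlsubmx M) (X' *m drsubmx M *m Y').
  move=> M; rewrite -{1}[M]submxK /Bx /By !mulmx_block.
  by rewrite !mul1mx !mul0mx !mulmx0 !mulmx1 !addr0 !add0r.
have uB : forall Z : 'M[int]_n, Z \in unitmx -> (block_mx 1 0 0 Z : 'M[int]_(1 + n)) \in unitmx.
  by move=> Z; rewrite !unitmxE det_ublock det1 mul1r.
exists (Bx *m X1), (Y1 *m By); split.
- by rewrite unitmx_mul uB // uX1.
- by rewrite unitmx_mul uB // uY1.
have e0 : (ord0 : 'I_n.+1) = lshift n (ord0 : 'I_1) by apply: val_inj.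
have r0 : forall i : 'I_n, (rshift 1 i == ord0 :> 'I_n.+1) = false.
  by move=> i; apply/negbTE; rewrite -val_eqE.
exists (ord0 |: [set rshift 1 i | i in I']), [set rshift 1 j | j in J']; split.
  have rinj : injective (@rshift 1 n) := @rshift_inj 1 n.
  rewrite cardsU1 (card_imset _ rinj) (card_imset _ rinj).
  have -> : (ord0 \in [set rshift 1 i | i in I']) = false.
    by apply/negbTE/imsetP => -[x _ /eqP]; rewrite eq_sym r0.
  by rewrite /= add1n addSn cIJ.
have -> : Bx *m X1 *m P *m (Y1 *m By) = Bx *m P2 *m By by rewrite -EP2 !mulmxA.
have -> : Bx *m X1 *m Q *m (Y1 *m By) = Bx *m Q2 *m By by rewrite -EQ2 !mulmxA.
rewrite !EB.
move=> i j; rewrite in_setU1 => /orP [/eqP -> | /imsetP [i' hi' ->]] /imsetP [j' hj' ->].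
  have ursE : forall (M : 'M[int]_n.+1) k, ursubmx (M : 'M_(1 + n)) 0 k = M ord0 (rshift 1 k).
    by move=> M k; rewrite !mxE; congr (_ _ _); apply: val_inj.
  split; rewrite mxE bur2 mxE rmorph_sum big1 // => k _;
    rewrite rmorphM /= ursE.
    by rewrite hP2 mul0r.
  by rewrite hQ2 ?rmorph0 ?mul0r ?r0.
have [h1 h2] := hIJ i' j' hi' hj'.
by split; rewrite mxE bdr2; [move: h1 | move: h2]; rewrite mxE.
Qed.
End Main.

Lemma int_unit_norm (z : int) : z \is a GRing.unit -> `|z| = 1.
Proof. by move=> uz; have /orP[/eqP->|/eqP->] : (z == 1) || (z == -1) := uz. Qed.

Lemma nc_of_block p (pp : prime p) n (P Q X Y : 'M[int]_n) (I J : {set 'I_n}) :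
  X \in unitmx -> Y \in unitmx -> (#|I| + #|J| = n.+1)%N ->
  (forall i j, i \in I -> j \in J ->
     (p %| (X *m P *m Y) i j)%Z /\ (p %| (X *m Q *m Y) i j)%Z) ->
  exists R S : 'M[rat]_n, [/\ R \in unitmx, S \in unitmx,
     0 < `|\det R * \det S| < 1,
     mx_integral (R *m ratmx P *m S) & mx_integral (R *m ratmx Q *m S)].
Proof.
move=> uX uY cIJ hIJ.
pose d1 : 'rV[rat]_n := \row_i (if i \in I then (p%:R)^-1 else 1).
pose d2 : 'rV[rat]_n := \row_j (if j \in J then 1 else p%:R).
have p0 : (p%:R : rat) != 0 by rewrite pnatr_eq0 -lt0n prime_gt0.
exists (diag_mx d1 *m ratmx X), (ratmx Y *m diag_mx d2).
have hint : forall A : 'M[int]_n,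
    (forall i j, i \in I -> j \in J -> (p %| (X *m A *m Y) i j)%Z) ->
    mx_integral (diag_mx d1 *m ratmx X *m ratmx A *m (ratmx Y *m diag_mx d2)).
  move=> A hA i j.
  have -> : diag_mx d1 *m ratmx X *m ratmx A *m (ratmx Y *m diag_mx d2) =
      diag_mx d1 *m ratmx (X *m A *m Y) *m diag_mx d2.
    by rewrite /ratmx !map_mxM !mulmxA.
  move: (hA i j); move: (X *m A *m Y) => B hB.
  rewrite mul_mx_diag mul_diag_mx !mxE.
  have pE : (p%:~R : rat) = p%:R by [].
  case: ifP => hi; case: ifP => hj.
  - have [k ->] : exists k, B i j = k * p%:Z.
      by move: (hB hi hj) => /dvdzP [k ->]; exists k.
    rewrite mulr1 intrM pE mulrCA mulVf // mulr1.
    exact: intr_int.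
  - have -> : forall a : rat, p%:R^-1 * a * p%:R = a.
      by move=> a; rewrite mulrAC mulVf // mul1r.
    exact: intr_int.
  - by rewrite mul1r mulr1 intr_int.
  - by rewrite mul1r rpredM ?intr_int ?natr_int.
have dd1 : \det (diag_mx d1) = (p%:R^-1) ^+ #|I|.
  rewrite det_diag.
  under eq_bigr => i _ do rewrite mxE.
  by rewrite -big_mkcond prodr_const.
have dd2 : \det (diag_mx d2) = (p%:R) ^+ #|[predC J]|.
  rewrite det_diag.
  under eq_bigr => i _ do rewrite mxE -if_neg.
  by rewrite -big_mkcond prodr_const.
have cJ := cardC J; rewrite card_ord in cJ.
have kI : #|I| = (#|[predC J]|).+1 by lia.
have dXY : `|(\det (ratmx X) : rat)| = 1 /\ `|(\det (ratmx Y) : rat)| = 1.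
  rewrite /ratmx !det_map_mx -!intr_norm.
  by rewrite unitmxE in uX; rewrite unitmxE in uY; rewrite !int_unit_norm.
have nd : `|\det (diag_mx d1 *m ratmx X) * \det (ratmx Y *m diag_mx d2)| = p%:R^-1.
  rewrite !det_mulmx !normrM (proj1 dXY) (proj2 dXY) mulr1 mul1r dd1 dd2 kI.
  by rewrite exprS exprVn -normrM divfK ?expf_neq0 // normfV normr_nat.
have p1 : (1 < p%:R :> rat) by rewrite ltr1n prime_gt1.
split.
- rewrite unitmxE unitfE; apply/eqP => h; move: nd.
  by rewrite h mul0r normr0 => /eqP; rewrite eq_sym invr_eq0 (negbTE p0).
- rewrite unitmxE unitfE; apply/eqP => h; move: nd.
  by rewrite h mulr0 normr0 => /eqP; rewrite eq_sym invr_eq0 (negbTE p0).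
- rewrite nd invr_gt0 invf_lt1 ?(lt_trans ltr01) // p1 andbT.
- apply: hint => i j hi hj; exact: (hIJ i j hi hj).1.
- apply: hint => i j hi hj; exact: (hIJ i j hi hj).2.
Qed.

Lemma integral_ratmx n (A : 'M[rat]_n) : mx_integral A -> exists B : 'M[int]_n, A = ratmx B.
Proof.
move=> hA; exists (map_mx (@Num.floor _) A); apply/matrixP => i j.
by rewrite !mxE floorK.
Qed.

Lemma absz_scale (z : int) (q : {poly rat}) :
  z%:~R *: q \is a polyOver Num.int -> (absz z)%:R *: q \is a polyOver Num.int.
Proof.
move=> h.
have -> : ((absz z)%:R : rat) = ((absz z)%:Z)%:~R by [].
rewrite abszEsign rmorphM rmorphXn rmorphN1 -scalerA.
by apply: polyOverZ => //; rewrite rpredX ?rpredN ?rpred1.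
Qed.

Lemma map_intr_int (F : {poly int}) : map_poly (intr : int -> rat) F \is a polyOver Num.int.
Proof. by apply/polyOverP => i; rewrite coef_map intr_int. Qed.

Unset Implicit Arguments. Set Strict Implicit.
Theorem theorem5p4 (d : nat) (P Q : 'M[int]_d) :
  \det P != 0 ->
  mx_irreducible (ratmx P) (ratmx Q) ->
  mx_coprime (ratmx P) (ratmx Q) <->
  least_int_clearing (absz (\det P))
    (char_poly (invmx (ratmx P) *m ratmx Q)).
Proof.
move=> dP _.
set D := \det P.
set cp := char_poly _.
have uP : ratmx P \in unitmx by rewrite unitmxE /ratmx det_map_mx unitfE intr_eq0.
have Erat : dpen (ratmx P) (ratmx Q) = D%:~R *: cp.
  by rewrite (dpen_inv _ uP) /ratmx det_map_mx mul_polyC.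
have EF : map_poly intr (dpen P Q) = D%:~R *: cp by rewrite dpen_map.
have cpm : lead_coef cp = 1 by apply/monicP; exact: char_poly_monic.
split.
- move=> hcop; split.
  + by rewrite absz_gt0.
  + by apply: absz_scale; rewrite -EF map_intr_int.
  move=> c' c'0 hc'; rewrite leqNgt; apply/negP => lt.
  pose g := gcdn c' (absz D).
  have g0 : (0 < g)%N by rewrite gcdn_gt0 c'0.
  have hg : g%:R *: cp \is a polyOver Num.int.
    have [u [v Euv]] := Bezoutz c'%:Z D.
    have -> : (g%:R : rat) = (u * c'%:Z + v * D)%:~R by rewrite Euv.
    rewrite rmorphD !rmorphM /= scalerDl -!scalerA.
    have h2 : D%:~R *: cp \is a polyOver Num.int by rewrite -EF map_intr_int.
    have h1 : (c'%:Z)%:~R *: cp \is a polyOver Num.int by [].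
    apply/polyOverP => i; rewrite coefD !coefZ.
    apply: rpredD; apply: rpredM; rewrite ?intr_int //.
      by rewrite -coefZ; exact: (polyOverP h1).
    by rewrite -coefZ; exact: (polyOverP h2).
  pose m := (absz D %/ g)%N.
  have Dm : absz D = (m * g)%N by rewrite divnK // dvdn_gcdr.
  have m1 : (1 < m)%N.
    have gc : (g <= c')%N by rewrite dvdn_leq // dvdn_gcdl.
    rewrite ltnNge; apply/negP => hm.
    have : (absz D <= g)%N by rewrite Dm -{2}[g]mul1n leq_mul2r hm orbT.
    lia.
  pose l := pdiv m.
  have pl : prime l by exact: pdiv_prime.
  have Fdiv : forall i, (l %| (dpen P Q)`_i)%Z.
    move=> i.
    have [k Ek] : exists k : int, (g%:R *: cp)`_i = k%:~R.
      by exists (Num.floor ((g%:R *: cp)`_i)); rewrite floorK //; exact: (polyOverP hg).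
    have E2 : (g%:Z * (dpen P Q)`_i)%:~R = (D * k)%:~R :> rat.
      rewrite !rmorphM /= -[((dpen P Q)`_i)%:~R](coef_map intr) EF -Ek !coefZ.
      by rewrite mulrCA.
    have E3 := intr_inj E2.
    have : (absz D %| absz (g%:Z * (dpen P Q)`_i)%R)%N by rewrite E3 abszM dvdn_mulr.
    rewrite abszM Dm /= [(g * _)%N]mulnC dvdn_pmul2r // => hm.
    exact: dvdn_trans (pdiv_dvd m) hm.
  have H0 : dpen (map_mx (intr : int -> 'F_l) P) (map_mx intr Q) = 0.
    rewrite -dpen_map; apply/polyP => i; rewrite coef_map coef0 /=.
    by apply/eqP; rewrite redP.
  have [X [Y [uX uY [I [J [cIJ hIJ]]]]]] := @main_ind l _ P Q H0.
  apply: hcop; apply: (nc_of_block pl uX uY cIJ) => i j hi hj.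
  have [h1 h2] := hIJ i j hi hj.
  by move: h1 h2; rewrite !mxE => /eqP h1 /eqP h2; rewrite -!redP.
- move=> [_ _ hmin] [R [S [uR uS /andP[t0 t1] iP iQ]]].
  have [P3 EP3] := integral_ratmx iP.
  have [Q3 EQ3] := integral_ratmx iQ.
  set t := \det R * \det S in t0 t1.
  have E1 : map_poly intr (dpen P3 Q3) = (t * D%:~R) *: cp.
    rewrite dpen_map -[map_mx _ P3]/(ratmx P3) -[map_mx _ Q3]/(ratmx Q3).
    by rewrite -EP3 -EQ3 dpenM Erat mul_polyC scalerA.
  have hint : (t * D%:~R) *: cp \is a polyOver Num.int by rewrite -E1 map_intr_int.
  have tDi : t * D%:~R \is a Num.int.
    have := polyOverP hint (size cp).-1.
    by rewrite coefZ -/(lead_coef cp) cpm mulr1.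
  have [z Ez] : exists z : int, t * D%:~R = z%:~R by exists (Num.floor (t * D%:~R)); rewrite floorK.
  have hc : (absz z)%:R *: cp \is a polyOver Num.int by apply: absz_scale; rewrite -Ez.
  have nz : ((absz z)%:R : rat) = `|t| * (absz D)%:R.
    by rewrite !natr_absz !intr_norm -Ez normrM.
  have z0 : (0 < absz z)%N.
    rewrite -(ltr_nat rat) nz pmulr_rgt0 // ltr0n absz_gt0 //.
  have := hmin _ z0 hc; rewrite -(ler_nat rat) nz.
  by rewrite -{1}[_%:R]mul1r ler_pM2r ?ltr0n ?absz_gt0 // leNgt t1.
Qed.
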